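(* Consider a family of metrics on real projective 3-space $RP^3$ (with size tending to infinity), and qudits of dimension $d\ge2$ placed equally spaced along a projective line $RP^1\subset RP^3$. The shift QCA on this $RP^1$ (mapping each operator at a site to the corresponding operator at the next site along the circle $RP^1$) cannot be realized by a finite depth quantum circuit.
   Context: A finite depth quantum circuit (fdqc) is a unitary obtained as the product of a bounded number of layers, each layer a product of unitaries (gates) on disjoint sets of bounded diameter, with the bounds on depth and gate diameter uniform along the family; it realizes a QCA by conjugation $O\mapsto U^\dagger O U$. A QCA is a $*$-automorphism of the operator algebra of the tensor product of the local Hilbert spaces which maps operators supported at a point to operators supported within a bounded distance of that point. *)

(* Defs.v *)
From HB Require Import structures.
From mathcomp Require Import all_boot all_order all_algebra.
From mathcomp Require Import all_classical all_reals all_analysis.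
From mathcomp Require Import complex.
From Stdlib Require List.
Set Implicit Arguments. Unset Strict Implicit. Unset Printing Implicit Defensive.
Import Order.TTheory GRing.Theory Num.Theory.
Local Open Scope ring_scope.

(* Points of RP^3 are represented by unit vectors of R^4 (up to sign);
   the round metric of scale s is  d([x],[y]) = s * arccos |<x,y>|.      *)
Definition rp3_dist (R : realType) (s : R) (x y : 'rV[R]_4) : R :=
  s * acos `|(x *m y^T) 0 0|.

(* N.+1 sites equally spaced along the projective line
   RP^1 = {[cos t : sin t : 0 : 0]} (t in [0, pi)). *)
Definition site_pt (R : realType) (N : nat) (k : 'I_N.+1) : 'rV[R]_4 :=
  let t := pi * (k%:R) / (N.+1)%:R in
  \row_(j < 4) (if val j == 0%N then cos t else if val j == 1%N then sin t else 0).

(* Scale making the spacing between consecutive sites equal to a: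
   RP^1 has length pi * s, so s = (N+1) a / pi. *)
Definition rp3_scale (R : realType) (N : nat) (a : R) : R := (N.+1)%:R * a / pi.

Definition site_dist (R : realType) (N : nat) (a : R) (i j : 'I_N.+1) : R :=
  rp3_dist (rp3_scale N a) (site_pt R i) (site_pt R j).

Definition diam_le (R : realType) (N : nat) (a : R) (S : {set 'I_N.+1}) (r : R) :=
  forall i j, i \in S -> j \in S -> site_dist a i j <= r.

(* Computational basis states: configurations 'I_N.+1 -> 'I_d;
   operators are matrices indexed by configurations. *)
Definition cfg (N d : nat) := {ffun 'I_N.+1 -> 'I_d}.
Definition Op (R : realType) (N d : nat) := cfg N d -> cfg N d -> R[i].

Section Ops.
Variables (R : realType) (N d : nat).
Local Notation Op := (Op R N d).

Definition op_mul (A B : Op) : Op := fun x y => \sum_(z : cfg N d) A x z * B z y.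
Definition op_id : Op := fun x y => (x == y)%:R.
Definition op_adj (A : Op) : Op := fun x y => (A y x)^*.
Definition op_eq (A B : Op) : Prop := forall x y, A x y = B x y.

Definition unitary (U : Op) : Prop :=
  op_eq (op_mul (op_adj U) U) op_id /\ op_eq (op_mul U (op_adj U)) op_id.

(* O = O_S (tensor) 1 on the complement of S *)
Definition supported_on (S : {set 'I_N.+1}) (O : Op) : Prop :=
  (forall x y : cfg N d, (exists i, i \notin S /\ x i <> y i) -> O x y = 0) /\
  (forall x y x' y' : cfg N d,
     (forall i, i \in S -> x i = x' i /\ y i = y' i) ->
     (forall i, i \notin S -> x i = y i /\ x' i = y' i) ->
     O x y = O x' y').

Definition prod_ops (s : seq Op) : Op := foldr op_mul op_id s.

Definition layer (a r : R) (L : Op) : Prop :=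
  exists gs : seq ({set 'I_N.+1} * Op),
    pairwise (fun g h : {set 'I_N.+1} * Op => [disjoint g.1 & h.1]) gs /\
    (forall g, List.In g gs -> unitary g.2 /\ supported_on g.1 g.2 /\ diam_le a g.1 r) /\
    op_eq L (prod_ops (map snd gs)).

Definition fdqc (a : R) (D : nat) (r : R) (U : Op) : Prop :=
  exists ls : seq Op, (size ls <= D)%N /\
    (forall L, List.In L ls -> layer a r L) /\ op_eq U (prod_ops ls).

Definition conj_by (U : Op) (O : Op) : Op := op_mul (op_adj U) (op_mul O U).

Definition shift_cfg (x : cfg N d) : cfg N d := [ffun i => x (ordS i)].
Definition shift_qca (O : Op) : Op := fun x y => O (shift_cfg x) (shift_cfg y).

Definition realizes (U : Op) (alpha : Op -> Op) : Prop :=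
  forall O, op_eq (conj_by U O) (alpha O).
End Ops.

(* Main.v *)
Require Import Defs.
From HB Require Import structures.
From mathcomp Require Import all_boot all_order all_algebra.
From mathcomp Require Import all_classical all_reals all_analysis.
From mathcomp Require Import complex.
From Stdlib Require Import Lia.
From mathcomp Require Import zify ring lra.
Import Order.TTheory GRing.Theory Num.Theory.
Local Open Scope ring_scope.
Set Implicit Arguments. Unset Strict Implicit. Unset Printing Implicit Defensive.

Lemma cs_real (C : numDomainType) (I : finType) (a b : I -> C) :
  (forall i, a i \is Num.real) -> (forall i, b i \is Num.real) ->
  (\sum_i a i * b i) ^+ 2 <= (\sum_i a i ^+ 2) * (\sum_i b i ^+ 2).
Proof.
move=> ra rb.
have H : 0 <= \sum_i \sum_j (a i * b j - a j * b i) ^+ 2.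
  apply: sumr_ge0 => i _; apply: sumr_ge0 => j _.
  by apply: real_exprn_even_ge0 => //; rewrite rpredB ?rpredM.
have e1 : \sum_i \sum_j (a i ^+ 2 * b j ^+ 2) = (\sum_i a i ^+ 2) * (\sum_i b i ^+ 2).
  by rewrite mulr_suml; apply: eq_bigr => i _; rewrite mulr_sumr.
have e2 : \sum_i \sum_j (a j ^+ 2 * b i ^+ 2) = (\sum_i a i ^+ 2) * (\sum_i b i ^+ 2).
  by rewrite exchange_big /= e1.
have e3 : \sum_i \sum_j (a i * b i * (a j * b j)) = (\sum_i a i * b i) ^+ 2.
  by rewrite expr2 mulr_suml; apply: eq_bigr => i _; rewrite mulr_sumr.
have E : \sum_i \sum_j (a i * b j - a j * b i) ^+ 2 =
   \sum_i \sum_j (a i ^+ 2 * b j ^+ 2) + \sum_i \sum_j (a j ^+ 2 * b i ^+ 2)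
   - 2 * \sum_i \sum_j (a i * b i * (a j * b j)).
  rewrite mulr_sumr -big_split -sumrB; apply: eq_bigr => i _.
  rewrite mulr_sumr -big_split -sumrB; apply: eq_bigr => j _.
  rewrite /=; ring.
rewrite E e1 e2 e3 in H.
have : 0 <= 2 * ((\sum_i a i ^+ 2) * (\sum_i b i ^+ 2) - (\sum_i a i * b i) ^+ 2).
  by move: H; set X := _ * _; set Y := _ ^+ 2; have -> : X + X - 2 * Y = 2 * (X - Y) by ring.
by rewrite pmulr_rge0 // subr_ge0.
Qed.

Lemma cs_norm (C : numDomainType) (I : finType) (u v : I -> C) :
  `|\sum_i u i * v i| ^+ 2 <= (\sum_i `|u i| ^+ 2) * (\sum_i `|v i| ^+ 2).
Proof.
apply: le_trans (@cs_real C I (fun i => `|u i|) (fun i => `|v i|) _ _); last 2 first.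
- by move=> i; apply: normr_real.
- by move=> i; apply: normr_real.
apply: lerXn2r.
- by rewrite nnegrE.
- by rewrite nnegrE; apply: sumr_ge0 => i _; rewrite mulr_ge0.
by apply: le_trans (ler_norm_sum _ _ _) _; apply: ler_sum => i _; rewrite normrM.
Qed.

Section OpAlg.
Variables (R : realType) (N d : nat).
Local Notation Op := (Op R N d).
Local Notation cfg := (cfg N d).
Local Notation op_id := (@op_id R N d).
Implicit Types (S T V W : {set 'I_N.+1}) (A B X : Op).

Lemma opext (A B : Op) : op_eq A B -> A = B.
Proof. move=> H; apply: funext => x; apply: funext => y; exact: H. Qed.

Lemma op_mulA (A B C : Op) : op_mul A (op_mul B C) = op_mul (op_mul A B) C.
Proof.
apply: opext => x y; rewrite /op_mul.
under eq_bigr => z _ do rewrite big_distrr /=.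
rewrite exchange_big /=; apply: eq_bigr => w _.
by rewrite big_distrl /=; apply: eq_bigr => z _; rewrite mulrA.
Qed.

Lemma op_mul1l (A : Op) : op_mul op_id A = A.
Proof.
apply: opext => x y; rewrite /op_mul (bigD1 x) //= big1 /op_id ?eqxx ?mul1r ?addr0 //.
by move=> z /negbTE; rewrite eq_sym => ->; rewrite mul0r.
Qed.

Lemma op_mul1r (A : Op) : op_mul A op_id = A.
Proof.
apply: opext => x y; rewrite /op_mul (bigD1 y) //= big1 /op_id ?eqxx ?mulr1 ?addr0 //.
by move=> z /negbTE ->; rewrite mulr0.
Qed.

Lemma op_adj_mul (A B : Op) : op_adj (op_mul A B) = op_mul (op_adj B) (op_adj A).
Proof.
apply: opext => x y; rewrite /op_adj /op_mul rmorph_sum /=.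
by apply: eq_bigr => z _; rewrite rmorphM mulrC.
Qed.

Lemma op_adjK (A : Op) : op_adj (op_adj A) = A.
Proof. by apply: opext => x y; rewrite /op_adj conjCK. Qed.

Lemma op_adj_id : op_adj op_id = op_id.
Proof. apply: opext => x y; rewrite /op_adj /op_id eq_sym; case: (x == y); by rewrite /= ?conjC1 ?conjC0. Qed.


Definition upd (x : cfg) (j : 'I_N.+1) (b : 'I_d) : cfg :=
  [ffun i => if i == j then b else x i].

Lemma upd_at x j b : upd x j b j = b.
Proof. by rewrite ffunE eqxx. Qed.
Lemma upd_ne x j b i : i != j -> upd x j b i = x i.
Proof. by rewrite ffunE => /negbTE ->. Qed.
Lemma upd_upd x j b c : upd (upd x j b) j c = upd x j c.
Proof. by apply/ffunP => i; rewrite !ffunE; case: (i == j). Qed.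
Lemma upd_id x j : upd x j (x j) = x.
Proof. by apply/ffunP => i; rewrite !ffunE; case: eqP => // ->. Qed.

Definition triv (j : 'I_N.+1) (X : Op) : Prop :=
  (forall x y : cfg, x j != y j -> X x y = 0) /\
  (forall (x y : cfg) b, x j = y j -> X (upd x j b) (upd y j b) = X x y).

Definition loc (S : {set 'I_N.+1}) (X : Op) : Prop :=
  forall j, j \notin S -> triv j X.

Lemma triv_id j : triv j op_id.
Proof.
split => [x y Hxy|x y b Hxy]; rewrite /op_id.
  by case: eqP => // E; rewrite E eqxx in Hxy.
case: (eqVneq x y) => [->|Hne]; first by rewrite eqxx.
suff -> : (upd x j b == upd y j b) = false by [].
apply/negbTE; apply: contra Hne => /eqP E; apply/eqP/ffunP => i.
case: (eqVneq i j) => [->//|Hi].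
by move/ffunP: E => /(_ i); rewrite !upd_ne.
Qed.

Lemma triv_adj j X : triv j X -> triv j (op_adj X).
Proof.
case=> H1 H2; split => [x y Hxy|x y b Hxy]; rewrite /op_adj.
  by rewrite H1 ?conjC0 // eq_sym.
by rewrite H2.
Qed.

Lemma triv_mul j A B : triv j A -> triv j B -> triv j (op_mul A B).
Proof.
case=> A1 A2 [B1 B2]; split => [x y Hxy|x y b Hxy]; rewrite /op_mul.
  apply: big1 => z _; case: (eqVneq (x j) (z j)) => h.
    by rewrite (B1 z y) ?mulr0 // -h.
  by rewrite A1 ?mul0r.
pose c := x j; pose t (v : 'I_d) := if v == c then b else if v == b then c else v.
have tK : involutive t.
  move=> v; rewrite /t.
  have [->|hc] := eqVneq v c; have [->|hb] := eqVneq b c; rewrite ?eqxx //.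
    by rewrite (negbTE hc) (negbTE hc).
  have [E|hvb] := eqVneq v b; first by rewrite E eqxx.
  by rewrite (negbTE hc) (negbTE hvb).
have tL : t c = b by rewrite /t eqxx.
pose tau (z : cfg) := upd z j (t (z j)).
have tauK : involutive tau.
  by move=> z; rewrite /tau upd_upd upd_at tK upd_id.
rewrite (reindex_inj (inv_inj tauK)) /=; apply: eq_bigr => z _.
case: (eqVneq (z j) c) => hz.
  rewrite /tau hz tL A2 ?B2 //; by rewrite hz.
rewrite (A1 x z); last by rewrite eq_sym.
rewrite A1 ?mul0r // upd_at /tau upd_at.
by rewrite -{1}tL (inj_eq (inv_inj tK)) eq_sym.
Qed.


Lemma loc_mono S S' X : S \subset S' -> loc S X -> loc S' X.
Proof. move=> /fintype.subsetP sub H j jS; apply: H; apply: contra jS; exact: sub. Qed.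
Lemma loc_mul S A B : loc S A -> loc S B -> loc S (op_mul A B).
Proof. by move=> HA HB j jS; apply: triv_mul; [apply: HA|apply: HB]. Qed.
Lemma loc_adj S A : loc S A -> loc S (op_adj A).
Proof. by move=> HA j jS; apply: triv_adj; apply: HA. Qed.
Lemma loc_id S : loc S op_id.
Proof. by move=> j _; apply: triv_id. Qed.

Lemma loc_zero S A (x y : cfg) j : loc S A -> j \notin S -> x j != y j -> A x y = 0.
Proof. by move=> HA jS; case: (HA j jS) => H _; apply: H. Qed.

Lemma loc_eq S A : loc S A -> forall x y x' y' : cfg,
  (forall j, j \in S -> x j = x' j /\ y j = y' j) ->
  (forall j, j \notin S -> x j = y j /\ x' j = y' j) -> A x y = A x' y'.
Proof.
move=> HA x0 y0 x' y'.
suff H : forall k (x y : cfg), (#|[set i | x i != x' i]| <= k)%N ->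
  (forall j, j \in S -> x j = x' j /\ y j = y' j) ->
  (forall j, j \notin S -> x j = y j /\ x' j = y' j) -> A x y = A x' y'.
  by apply: H.
elim=> [|k IH] x y Hk H1 H2.
  have Ex : x = x'.
    apply/ffunP => i; apply/eqP; apply: contraT => Hi.
    by move: Hk; rewrite leqn0 cards_eq0 => /eqP/setP/(_ i); rewrite inE Hi inE.
  have Ey : y = y'.
    apply/ffunP => i; case: (boolP (i \in S)) => iS; first by case: (H1 i iS).
    by case: (H2 i iS) => <- <-; rewrite Ex.
  by rewrite Ex Ey.
case: (set_0Vmem [set i | x i != x' i]) => [E | [i Hi]].
  by apply: (IH x y) => //; rewrite E cards0.
move: Hi; rewrite inE => Hi.
have iS : i \notin S by apply: contra Hi => iS; case: (H1 i iS) => ->.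
case: (HA i iS) => _ A2.
rewrite -(A2 x y (x' i)); last by case: (H2 i iS).
apply: IH.
- rewrite -ltnS; apply: leq_trans Hk; apply: proper_card; apply/properP; split.
    apply/fintype.subsetP => j; rewrite !inE ffunE.
    by case: (eqVneq j i) => [->|_]; rewrite ?eqxx.
  by exists i; rewrite !inE ?Hi // upd_at eqxx.
- move=> j jS; have jne : j != i by apply: contra iS => /eqP <-.
  by rewrite !upd_ne //; apply: H1.
- move=> j jS; case: (eqVneq j i) => [->|jne].
    by rewrite !upd_at; split => //; case: (H2 i iS).
  by rewrite !upd_ne //; apply: H2.
Qed.

Lemma sum_single (F : cfg -> R[i]) z0 : (forall z, z != z0 -> F z = 0) ->
  \sum_z F z = F z0.
Proof. by move=> H; rewrite (bigD1 z0) //= big1 ?addr0 // => z /H. Qed.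

Lemma loc_commute T V A B : loc T A -> loc V B ->
  (forall j, j \in T -> j \notin V) -> op_mul A B = op_mul B A.
Proof.
move=> HA HB TV; apply: opext => x y; rewrite /op_mul.
pose z0 : cfg := [ffun j => if j \in T then y j else x j].
pose z1 : cfg := [ffun j => if j \in V then y j else x j].
rewrite (sum_single (z0 := z0)); last first.
  move=> z; case: (boolP [exists j, z j != z0 j]) => [/existsP[j Hj] _|].
    case: (boolP (j \in T)) => jT.
      by rewrite (loc_zero (j := j) HB) ?mulr0 // ?TV //; move: Hj; rewrite ffunE jT.
    by rewrite (loc_zero (j := j) HA) ?mul0r //; move: Hj; rewrite ffunE (negbTE jT) eq_sym.
  rewrite negb_exists => /forallP H /negP []; apply/eqP/ffunP => j.
  by have := H j; rewrite negbK => /eqP.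
rewrite (sum_single (z0 := z1)); last first.
  move=> z; case: (boolP [exists j, z j != z1 j]) => [/existsP[j Hj] _|].
    case: (boolP (j \in V)) => jV.
      have jT : j \notin T by apply/negP => /TV; rewrite jV.
      by rewrite (loc_zero (j := j) HA) ?mulr0 //; move: Hj; rewrite ffunE jV.
    by rewrite (loc_zero (j := j) HB) ?mul0r //; move: Hj; rewrite ffunE (negbTE jV) eq_sym.
  rewrite negb_exists => /forallP H /negP []; apply/eqP/ffunP => j.
  by have := H j; rewrite negbK => /eqP.
case: (boolP [exists j, [&& j \notin T, j \notin V & x j != y j]]).
  case/existsP => j /ssrbool.and3P[jT jV xy].
  rewrite (loc_zero (j := j) HB) ?mulr0 //; last by rewrite ffunE (negbTE jT).
  by rewrite (loc_zero (j := j) (x := z1) (y := y) HA) ?mulr0 //; rewrite ffunE (negbTE jV).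
rewrite negb_exists => /forallP Hxy.
have Exy : forall j, j \notin T -> j \notin V -> x j = y j.
  by move=> j jT jV; move: (Hxy j); rewrite jT jV /= negbK => /eqP.
rewrite mulrC; congr (_ * _).
  apply: (loc_eq HB) => j jV; rewrite !ffunE.
    have jT : j \notin T by apply/negP => /TV; rewrite jV.
    by rewrite jV (negbTE jT).
  rewrite (negbTE jV); split => //; case: (boolP (j \in T)) => // jT.
  by rewrite Exy.
apply: (loc_eq HA) => j jT; rewrite !ffunE.
  by rewrite (negbTE (TV j jT)) jT.
case: (boolP (j \in V)) => jV; rewrite (negbTE jT) //; split => //.
by rewrite Exy.
Qed.

Lemma supp_loc S X : supported_on S X -> loc S X.
Proof.
case=> H1 H2 j jS; split => [x y Hxy|x y b Hxy].
  by apply: H1; exists j; split => //; apply/eqP.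
case: (boolP [exists i, (i \notin S) && (x i != y i)]).
  case/existsP => i /andP[iS xy].
  have ij : i != j by apply: contra xy => /eqP ->; rewrite Hxy.
  rewrite (H1 x y); last by exists i; split => //; apply/eqP.
  by apply: H1; exists i; split => //; rewrite !upd_ne //; apply/eqP.
rewrite negb_exists => /forallP Hall.
symmetry; apply: H2 => i iS.
  have ij : i != j by apply: contra jS => /eqP <-.
  by rewrite !upd_ne.
have := Hall i; rewrite iS /= negbK => /eqP E; split => //.
case: (eqVneq i j) => [->|ij]; first by rewrite !upd_at.
by rewrite !upd_ne.
Qed.


Definition cj (U X : Op) : Op := conj_by U X.

Lemma unitaryE U : unitary U ->
  op_mul (op_adj U) U = op_id /\ op_mul U (op_adj U) = op_id.
Proof. by case=> H1 H2; split; apply: opext. Qed.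

Lemma cj_mul A B X : cj (op_mul A B) X = cj B (cj A X).
Proof. by rewrite /cj /conj_by op_adj_mul !op_mulA. Qed.

Lemma cj_id X : cj op_id X = X.
Proof. by rewrite /cj /conj_by op_adj_id op_mul1l op_mul1r. Qed.

Lemma unitary_id : unitary op_id.
Proof. by split => x y; rewrite op_adj_id op_mul1l. Qed.

Lemma unitary_mul A B : unitary A -> unitary B -> unitary (op_mul A B).
Proof.
move=> /unitaryE[A1 A2] /unitaryE[B1 B2]; split => x y; rewrite op_adj_mul.
  by rewrite op_mulA -(op_mulA (op_adj B)) A1 op_mul1r B1.
by rewrite op_mulA -(op_mulA A) B2 op_mul1r A2.
Qed.

Lemma cjM U A B : unitary U -> cj U (op_mul A B) = op_mul (cj U A) (cj U B).
Proof.
move=> /unitaryE[U1 U2]; rewrite /cj /conj_by.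
by rewrite !op_mulA -(op_mulA _ U) U2 op_mul1r.
Qed.

Lemma cj_adj U X : op_adj (cj U X) = cj U (op_adj X).
Proof. by rewrite /cj /conj_by !op_adj_mul op_adjK op_mulA. Qed.

Lemma cj_triv G X T V : unitary G -> loc T G -> loc V X ->
  (forall j, j \in V -> j \notin T) -> cj G X = X.
Proof.
move=> /unitaryE[G1 G2] HG HX VT; rewrite /cj /conj_by.
by rewrite (loc_commute HX HG VT) op_mulA G1 op_mul1l.
Qed.

Lemma cj_loc G X T V : loc T G -> loc V X -> loc (V :|: T) (cj G X).
Proof.
move=> HG HX; rewrite /cj /conj_by.
have HG' := loc_mono (finset.subsetUr V T) HG; have HX' := loc_mono (finset.subsetUl V T) HX.
by apply: loc_mul; [apply: loc_adj|apply: loc_mul].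
Qed.

Definition tr (X : Op) : R[i] := \sum_x X x x.

Lemma tr_mulC A B : tr (op_mul A B) = tr (op_mul B A).
Proof.
rewrite /tr /op_mul exchange_big /=; apply: eq_bigr => x _.
by apply: eq_bigr => z _; rewrite mulrC.
Qed.

Lemma tr_cj U X : unitary U -> tr (cj U X) = tr X.
Proof.
move=> /unitaryE[U1 U2]; rewrite /cj /conj_by tr_mulC -op_mulA U2 op_mul1r //.
Qed.

Lemma prod_cons (a : Op) s : prod_ops (a :: s) = op_mul a (prod_ops s).
Proof. by []. Qed.

Lemma all_In (T0 : Type) (p : pred T0) s x : all p s -> List.In x s -> p x.
Proof. by elim: s => //= y s IH /andP[py ps] [<-|/IH]; last exact. Qed.

Definition gate := ({set 'I_N.+1} * Op)%type.
Definition gop (keep : gate -> bool) (g : gate) : Op := if keep g then g.2 else op_id.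
Definition meets S V := [exists j, (j \in S) && (j \in V)].

Lemma meetsP S V : ~~ meets S V -> forall j, j \in S -> j \notin V.
Proof.
by move=> /existsPn H j jS; apply/negP => jV; move: (H j); rewrite jS jV.
Qed.

Lemma layer_lc (keep : gate -> bool) (gs : seq gate) V0 T :
  pairwise (fun g h : gate => [disjoint g.1 & h.1]) gs ->
  (forall g, List.In g gs -> unitary g.2 /\ loc g.1 g.2) ->
  V0 \subset T ->
  (forall g, List.In g gs -> keep g -> meets g.1 V0 -> g.1 \subset T) ->
  forall V X, V0 \subset V -> V \subset T ->
  (forall g, List.In g gs -> ~~ meets g.1 V0 -> forall j, j \in g.1 -> j \notin V) ->
  loc V X ->
  loc T (cj (prod_ops (map (gop keep) gs)) X) /\
  ((forall g, List.In g gs -> meets g.1 V0 -> keep g) ->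
     cj (prod_ops (map (gop keep) gs)) X = cj (prod_ops (map snd gs)) X).
Proof.
move=> Hpw Hg V0T Hkeep; elim: gs Hpw Hg Hkeep => [|g gs IH] Hpw Hg Hkeep V X V0V VT Hdis HX.
  by rewrite /= cj_id; split => //; apply: loc_mono HX.
move: Hpw => /= /andP[Hall Hpw].
have Hg' : forall h, List.In h gs -> unitary h.2 /\ loc h.1 h.2 by move=> h Hh; apply: Hg; right.
have Hkeep' : forall h, List.In h gs -> keep h -> meets h.1 V0 -> h.1 \subset T.
  by move=> h Hh; apply: Hkeep; right.
have [gU gL] := Hg g (or_introl erefl).
have gdis : forall h, List.In h gs -> forall j, j \in g.1 -> j \notin h.1.
  move=> h Hh j jg; have := all_In Hall Hh => /= Hd.
  by rewrite (disjointFr Hd jg).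
case: (boolP (meets g.1 V0)) => Hm.
  case: (boolP (keep g)) => Hk.
    have HX' := cj_loc gL HX.
    have [||||H1 H2] := IH Hpw Hg' Hkeep' (V :|: g.1) (cj g.2 X).
    - exact: fintype.subset_trans V0V (finset.subsetUl _ _).
    - by rewrite finset.subUset VT Hkeep //; left.
    - move=> h Hh Hhm j jh; rewrite inE negb_or.
      by rewrite (Hdis h (or_intror Hh) Hhm j jh) /=; apply/negP => /(gdis h Hh j); rewrite jh.
    - by [].
    by rewrite ?map_cons ?prod_cons !cj_mul /gop Hk; split => // Hall'; apply: H2 => h Hh; apply: Hall'; right.
  have [||||H1 H2] := IH Hpw Hg' Hkeep' V X => //.
  - by move=> h Hh; apply: Hdis; right.
  rewrite ?map_cons ?prod_cons !cj_mul /gop (negbTE Hk) cj_id; split => // Hall'.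
  by move: (Hall' g (or_introl erefl) Hm); rewrite (negbTE Hk).
have gX : cj g.2 X = X.
  apply: (cj_triv gU gL HX) => j jV; apply/negP => jg.
  by move: (Hdis g (or_introl erefl) Hm j jg); rewrite jV.
have [||||H1 H2] := IH Hpw Hg' Hkeep' V X => //.
- by move=> h Hh; apply: Hdis; right.
have E : cj (gop keep g) X = X by rewrite /gop; case: (keep g); rewrite ?cj_id.
by rewrite ?map_cons ?prod_cons !cj_mul gX E; split => // Hall'; apply: H2 => h Hh; apply: Hall'; right.
Qed.


Definition dl (i j : 'I_N.+1) : nat := ((i - j) + (j - i))%N.
Definition cd (i j : 'I_N.+1) : nat := minn (dl i j) (N.+1 - dl i j).

Lemma cd_refl i : cd i i = 0%N.
Proof. by rewrite /cd /dl subnn. Qed.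

Lemma cd_sym i j : cd i j = cd j i.
Proof. by rewrite /cd /dl addnC. Qed.

Lemma cd_tri i j k : (cd i k <= cd i j + cd j k)%N.
Proof.
rewrite /cd /dl; have := ltn_ord i; have := ltn_ord j; have := ltn_ord k.
move: (nat_of_ord i) (nat_of_ord j) (nat_of_ord k) => a b c ha hb hc.
lia.
Qed.

Definition ball V (k : nat) : {set 'I_N.+1} := [set j | [exists v in V, (cd v j <= k)%N]].

Lemma ball_sub V k : V \subset ball V k.
Proof. by apply/fintype.subsetP => j jV; rewrite inE; apply/existsP; exists j; rewrite jV cd_refl. Qed.

Lemma ball_mono V k k' : (k <= k')%N -> ball V k \subset ball V k'.
Proof.
move=> kk; apply/fintype.subsetP => j; rewrite !inE => /existsP [v /andP[vV vj]].
by apply/existsP; exists v; rewrite vV (leq_trans vj kk).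
Qed.

Lemma ball_ball V a b : ball (ball V a) b \subset ball V (a + b).
Proof.
apply/fintype.subsetP => j; rewrite !inE => /existsP [u /andP[]].
rewrite inE => /existsP [v /andP[vV vu]] uj.
by apply/existsP; exists v; rewrite vV (leq_trans (cd_tri v u j)) // leq_add.
Qed.

Lemma ball_setmono V V' k : V \subset V' -> ball V k \subset ball V' k.
Proof.
move=> /fintype.subsetP sub; apply/fintype.subsetP => j; rewrite !inE => /existsP [v /andP[vV vj]].
by apply/existsP; exists v; rewrite (sub v vV).
Qed.

Definition small (m : nat) S := forall i j, i \in S -> j \in S -> (cd i j <= m)%N.

Lemma small_ball m S V : small m S -> meets S V -> S \subset ball V m.
Proof.
move=> Hs /existsP[v /andP[vS vV]]; apply/fintype.subsetP => j jS.
by rewrite inE; apply/existsP; exists v; rewrite vV Hs.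
Qed.

Definition good_layer (m : nat) (gs : seq gate) :=
  [/\ pairwise (fun g h : gate => [disjoint g.1 & h.1]) gs,
      (forall g, List.In g gs -> unitary g.2 /\ loc g.1 g.2) &
      (forall g, List.In g gs -> small m g.1)].

Definition circ (keep : gate -> bool) (gss : seq (seq gate)) : Op :=
  prod_ops [seq prod_ops (map (gop keep) gs) | gs <- gss].

Definition keepW W (g : gate) := ~~ meets g.1 W.

Lemma circ_cons keep gs gss : circ keep (gs :: gss) = op_mul (prod_ops (map (gop keep) gs)) (circ keep gss).
Proof. by []. Qed.

Lemma circ_trunc m W gss V0 : (forall gs, List.In gs gss -> good_layer m gs) ->
  forall k X, loc (ball V0 k :&: ~: W) X ->
  loc (ball V0 (k + size gss * m) :&: ~: W) (cj (circ (keepW W) gss) X).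
Proof.
elim: gss => [|gs gss IH] Hgood k X HX.
  by rewrite /circ /= cj_id addn0.
rewrite circ_cons cj_mul.
have [Hpw Hg Hsm] := Hgood gs (or_introl erefl).
have Hg' : forall g, List.In g gs -> unitary g.2 /\ loc g.1 g.2 by [].
have P1 : ball V0 k :&: ~: W \subset ball V0 (k + m) :&: ~: W.
  by apply: finset.setSI; apply: ball_mono; apply: leq_addr.
have P2 : forall g, List.In g gs -> keepW W g -> meets g.1 (ball V0 k :&: ~: W) ->
    g.1 \subset ball V0 (k + m) :&: ~: W.
  move=> g Hin Hk Hm; rewrite finset.subsetI; apply/andP; split.
    apply: fintype.subset_trans (small_ball (Hsm g Hin) Hm) _.
    apply: fintype.subset_trans (ball_ball _ _ _).
    by apply: ball_setmono; apply: finset.subsetIl.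
  apply/fintype.subsetP => j jg; rewrite inE; exact: meetsP Hk j jg.
have [H1 _] := layer_lc Hpw Hg' P1 P2 (fintype.subxx _) P1 (fun g _ Hm => meetsP Hm) HX.
have := IH (fun gs' H => Hgood gs' (or_intror H)) (k + m)%N _ H1.
by rewrite /= -addnA mulSn.
Qed.


Lemma circ_eq m W gss V0 : (forall gs, List.In gs gss -> good_layer m gs) ->
  forall k X, loc (ball V0 k) X ->
  (forall j, j \in ball V0 (k + size gss * m) -> j \notin W) ->
  cj (circ (keepW W) gss) X = cj (circ (fun _ => true) gss) X.
Proof.
elim: gss => [|gs gss IH] Hgood k X HX HW; first by [].
rewrite !circ_cons !cj_mul.
have [Hpw Hg Hsm] := Hgood gs (or_introl erefl).
have P1 : ball V0 k \subset ball V0 (k + m) by apply: ball_mono; apply: leq_addr.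
have P2 : forall (keep : gate -> bool) g, List.In g gs -> keep g -> meets g.1 (ball V0 k) ->
    g.1 \subset ball V0 (k + m).
  move=> keep g Hin _ Hm; apply: fintype.subset_trans (small_ball (Hsm g Hin) Hm) _.
  exact: ball_ball.
have [H1 _] := layer_lc Hpw Hg P1 (P2 (fun _ => true)) (fintype.subxx _) P1 (fun g _ Hm => meetsP Hm) HX.
have [_ H2] := layer_lc Hpw Hg P1 (P2 (keepW W)) (fintype.subxx _) P1 (fun g _ Hm => meetsP Hm) HX.
have E : map (gop (fun _ => true)) gs = map snd gs by apply: eq_map.
rewrite H2; last first.
  move=> g Hin Hm; apply/existsP => -[j /andP [jg jW]].
  have : j \in ball V0 (k + (size (gs :: gss)) * m).
    apply: (fintype.subsetP (ball_mono _ _)) (fintype.subsetP (P2 (fun _ => true) g Hin erefl Hm) j jg).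
    by rewrite /= mulSn addnA leq_addr.
  by move/HW; rewrite jW.
rewrite -E; apply: (IH _ (k + m)%N _ H1).
- by move=> gs' H; apply: Hgood; right.
- by move=> j Hj; apply: HW; rewrite /= mulSn addnA.
Qed.


Definition zeroS S (o : 'I_d) (x : cfg) := [forall i in S, x i == o].
Definition blk S (x y : cfg) := [forall i, (i \notin S) ==> (y i == x i)].
Definition zfy S (o : 'I_d) (y : cfg) : cfg := [ffun i => if i \in S then o else y i].

Section Proj.
Variable Q : Op.
Hypothesis QQ : op_mul Q Q = Q.
Hypothesis QA : op_adj Q = Q.

Lemma Qconj x y : Q y x = (Q x y)^*.
Proof. by rewrite -{1}QA. Qed.

Lemma proj_diag x : Q x x = \sum_y `|Q x y| ^+ 2.
Proof.
rewrite -{1}QQ /op_mul; apply: eq_bigr => y _.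
by rewrite normCK (Qconj x y).
Qed.

Lemma proj_ge0 x : 0 <= Q x x.
Proof. by rewrite proj_diag; apply: sumr_ge0 => y _; apply: exprn_ge0. Qed.

Lemma proj_cs x y : `|Q x y| ^+ 2 <= Q x x * Q y y.
Proof.
rewrite -{1}QQ /op_mul; apply: le_trans (cs_norm _ _) _.
rewrite !proj_diag; apply: ler_pM.
- by apply: sumr_ge0 => z _; apply: exprn_ge0.
- by apply: sumr_ge0 => z _; apply: exprn_ge0.
- by [].
by rewrite le_eqVlt; apply/orP; left; apply/eqP; apply: eq_bigr => z _; rewrite (Qconj y z) norm_conjC.
Qed.

Lemma blk_ge1 S x : loc S Q -> Q x x != 0 -> 1 <= \sum_(y | blk S x y) Q y y.
Proof.
move=> HQ Hx.
have Hpos : 0 < Q x x by rewrite lt_def Hx proj_ge0.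
have : Q x x * 1 <= Q x x * \sum_(y | blk S x y) Q y y.
  rewrite mulr1 mulr_sumr {1}proj_diag (bigID (blk S x)) /=.
  rewrite [X in _ + X]big1 ?addr0; last first.
    move=> y; rewrite negb_forall => /existsP [k]; rewrite negb_imply => /andP[iS yx].
    by rewrite (loc_zero (j := k) HQ) ?normr0 ?expr0n // eq_sym.
  by apply: ler_sum => y _; apply: proj_cs.
by rewrite ler_pM2l.
Qed.

Lemma tr_part S o : tr Q = \sum_(x | zeroS S o x) \sum_(y | blk S x y) Q y y.
Proof.
rewrite /tr (partition_big (zfy S o) (zeroS S o)) /=; last first.
  by move=> y _; apply/forallP => i; apply/implyP => iS; rewrite ffunE iS.
apply: eq_bigr => x zx; apply: eq_bigl => y.
apply/eqP/forallP => [<- i|H].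
  by apply/implyP => iS; rewrite ffunE (negbTE iS).
apply/ffunP => i; rewrite ffunE; case: ifP => iS.
  by move/forallP: zx => /(_ i); rewrite iS => /eqP.
by move: (H i); rewrite iS => /eqP.
Qed.

Lemma proj_tr_ge S o : loc S Q -> tr Q != 0 ->
  (#|[set x | zeroS S o x]|)%:R <= tr Q.
Proof.
move=> HQ Htr.
case: (pickP (fun x => Q x x != 0)) => [x0 Hx0|H0]; last first.
  by move: Htr; rewrite /tr big1 ?eqxx // => x _; move: (H0 x) => /= /negbFE /eqP.
rewrite (tr_part S o) -sum1_card natr_sum.
rewrite (eq_bigl (fun x => zeroS S o x)); last by move=> x; rewrite inE.
apply: ler_sum => x _.
pose x1 : cfg := [ffun i => if i \in S then x0 i else x i].
have E1 : Q x1 x1 = Q x0 x0.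
  apply: (loc_eq HQ).
    by move=> j jS; rewrite !ffunE jS.
  by move=> j jS; rewrite !ffunE (negbTE jS).
rewrite (eq_bigl (blk S x1)); first by apply: blk_ge1 => //; rewrite E1.
move=> y; apply: eq_forallb => i; case: (boolP (i \in S)) => //= iS.
by rewrite ffunE (negbTE iS).
Qed.

End Proj.


Definition Eu (k : 'I_N.+1) (a b : 'I_d) : Op := fun x y =>
  ((x k == a) && (y k == b) && [forall i, (i != k) ==> (x i == y i)])%:R.

Lemma mulE_r X k a b x y :
  op_mul X (Eu k a b) x y = if y k == b then X x (upd y k a) else 0.
Proof.
rewrite /op_mul (sum_single (z0 := upd y k a)).
  rewrite /Eu upd_at eqxx /=.
  have -> : [forall i, (i != k) ==> (upd y k a i == y i)].
    by apply/forallP => i; apply/implyP => ik; rewrite upd_ne.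
  by case: (y k == b); rewrite ?mulr1 ?mulr0.
move=> z zne; rewrite /Eu.
case: (boolP [&& z k == a, y k == b & [forall i, (i != k) ==> (z i == y i)]]).
  case/ssrbool.and3P => /eqP za _ /forallP H; case/negP: zne; apply/eqP/ffunP => i.
  case: (eqVneq i k) => [->|ik]; first by rewrite upd_at.
  by rewrite upd_ne //; move: (H i); rewrite ik => /eqP.
by rewrite andbA => /negbTE ->; rewrite mulr0.
Qed.

Lemma mulE_l X k a b x y :
  op_mul (Eu k a b) X x y = if x k == a then X (upd x k b) y else 0.
Proof.
rewrite /op_mul (sum_single (z0 := upd x k b)).
  rewrite /Eu upd_at eqxx andbT.
  have -> : [forall i, (i != k) ==> (x i == upd x k b i)].
    by apply/forallP => i; apply/implyP => ik; rewrite upd_ne.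
  by case: (x k == a); rewrite ?mul1r ?mul0r.
move=> z zne; rewrite /Eu.
case: (boolP [&& x k == a, z k == b & [forall i, (i != k) ==> (x i == z i)]]).
  case/ssrbool.and3P => _ /eqP zb /forallP H; case/negP: zne; apply/eqP/ffunP => i.
  case: (eqVneq i k) => [->|ik]; first by rewrite upd_at.
  by rewrite upd_ne //; move: (H i); rewrite ik => /eqP.
by rewrite andbA => /negbTE ->; rewrite mul0r.
Qed.

Lemma triv_of_comm X k : (forall a b, op_mul X (Eu k a b) = op_mul (Eu k a b) X) -> triv k X.
Proof.
move=> H; split => [x y Hxy|x y b Hxy].
  have := congr1 (fun F => F x y) (H (y k) (y k)) => /=.
  by rewrite mulE_r mulE_l eqxx upd_id (negbTE Hxy).
have := congr1 (fun F => F x (upd y k b)) (H (x k) b) => /=.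
rewrite mulE_r mulE_l !upd_at !eqxx upd_upd Hxy upd_id => ->.
by [].
Qed.

Lemma loc_Eu k a b : loc [set k] (Eu k a b).
Proof.
move=> j; rewrite inE => jk; split => [x y Hxy|x y c Hxy]; rewrite /Eu.
  case: (boolP (_ && _ && _)) => //; case/andP => _ /forallP /(_ j).
  by rewrite jk (negbTE Hxy).
have kj : k != j by rewrite eq_sym.
rewrite !upd_ne //; congr ((_ && _ && _)%:R); apply: eq_forallb => i.
case: (eqVneq i j) => [->|ij]; first by rewrite !upd_at eqxx Hxy eqxx implybT.
by rewrite !upd_ne.
Qed.

Lemma shift_Eu k a b : shift_qca (Eu k a b) = Eu (ordS k) a b.
Proof.
apply: opext => x y; rewrite /shift_qca /Eu /shift_cfg !ffunE.
congr ((_ && _ && _)%:R); apply/forallP/forallP => H i.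
  apply/implyP => ik; move: (H (ord_pred i)); rewrite !ffunE ord_predK.
  move=> /implyP; apply; apply: contra ik => /eqP <-; by rewrite ord_predK.
apply/implyP => ik; move: (H (ordS i)); rewrite !ffunE.
by rewrite (inj_eq (can_inj (@ordSK _))) ik.
Qed.

Definition Pz S (o : 'I_d) : Op := fun x y => ((x == y) && zeroS S o x)%:R.

Lemma loc_Pz S o : loc S (Pz S o).
Proof.
move=> j jS; split => [x y Hxy|x y b Hxy]; rewrite /Pz.
  by case: eqP => [E|]; [rewrite E eqxx in Hxy|].
have -> : (upd x j b == upd y j b) = (x == y).
  apply/eqP/eqP => [E|->] //; apply/ffunP => i; case: (eqVneq i j) => [->//|ij].
  by move/ffunP: E => /(_ i); rewrite !upd_ne.
congr ((_ && _)%:R); apply: eq_forallb_in => i iS.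
by rewrite upd_ne //; apply: contra jS => /eqP <-.
Qed.

Lemma Pz_idem S o : op_mul (Pz S o) (Pz S o) = Pz S o.
Proof.
apply: opext => x y; rewrite /op_mul (sum_single (z0 := x)).
  by rewrite /Pz eqxx /=; case: (zeroS S o x); case: (x == y); rewrite /= ?mulr1 ?mulr0 ?mul0r ?mul1r.
by move=> z; rewrite /Pz eq_sym => /negbTE ->; rewrite mul0r.
Qed.

Lemma Pz_adj S o : op_adj (Pz S o) = Pz S o.
Proof.
apply: opext => x y; rewrite /op_adj /Pz conjC_nat.
by case: (eqVneq y x) => [->|ne] //; rewrite eq_sym (negbTE ne).
Qed.

Lemma tr_Pz S o : tr (Pz S o) = (#|[set x | zeroS S o x]|)%:R.
Proof.
rewrite /tr /Pz -sum1_card natr_sum (big_mkcond (fun x => x \in _)) /=.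
by apply: eq_bigr => x _; rewrite eqxx inE; case: (zeroS S o x).
Qed.

End OpAlg.

Section Geo.
Variables (R : realType) (N : nat).

Lemma dot_site (i j : 'I_N.+1) :
  ((site_pt R i *m (site_pt R j)^T) 0 0) =
  cos (pi * (i%:R) / (N.+1)%:R - pi * (j%:R) / (N.+1)%:R).
Proof.
rewrite !mxE cosB !big_ord_recl big_ord0 /= !mxE /=.
by rewrite !mul0r !addr0.
Qed.


Lemma cos_dl (i j : 'I_N.+1) :
  cos (pi * (i%:R) / (N.+1)%:R - pi * (j%:R) / (N.+1)%:R) =
  cos (pi * (dl i j)%:R / (N.+1)%:R :> R).
Proof.
rewrite /dl; case: (leqP j i) => ji.
  have -> : (j - i = 0)%N by apply/eqP; rewrite subn_eq0.
  rewrite addn0.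
  rewrite natrB; last exact: ji.
  congr cos; ring.
have -> : (i - j = 0)%N by apply/eqP; rewrite subn_eq0 ltnW.
rewrite add0n natrB; last exact: ltnW.
rewrite -cosN; congr cos; ring.
Qed.

Lemma cpos (c : nat) : (2 * c <= N.+1)%N -> 0 <= cos (pi * c%:R / (N.+1)%:R :> R).
Proof.
move=> hc; apply: cos_ge0_pihalf; apply/andP; split.
  apply: (@le_trans _ _ 0); first by rewrite oppr_le0 divr_ge0 ?pi_ge0.
  by rewrite !mulr_ge0 ?pi_ge0 ?invr_ge0 ?ler0n.
rewrite -mulrA ler_pM2l; last exact: pi_gt0.
rewrite ler_pdivrMr; last by rewrite ltr0n.
rewrite mulrC ler_pdivlMr; last by rewrite ltr0n.
rewrite -natrM ler_nat; lia.
Qed.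


Lemma abs_cos_cd (i j : 'I_N.+1) :
  `|cos (pi * (dl i j)%:R / (N.+1)%:R)| = cos (pi * (cd i j)%:R / (N.+1)%:R :> R).
Proof.
have hk : (dl i j < N.+1)%N by rewrite /dl; have := ltn_ord i; have := ltn_ord j; lia.
rewrite /cd; case: (leqP (dl i j) (N.+1 - dl i j)) => h.
  rewrite ger0_norm; first by [].
  apply: cpos; lia.
idtac.
have -> : pi * (dl i j)%:R / (N.+1)%:R = - (pi * (N.+1 - dl i j)%:R / (N.+1)%:R) + pi :> R.
  rewrite natrB; last exact: ltnW.
  have n0 : (N.+1)%:R != 0 :> R by rewrite pnatr_eq0.
  by field.
rewrite cosDpi cosN normrN ger0_norm; first by [].
apply: cpos; lia.
Qed.

Lemma site_dist_cd (a : R) (i j : 'I_N.+1) :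
  site_dist a i j = a * (cd i j)%:R.
Proof.
rewrite /site_dist /rp3_dist dot_site cos_dl abs_cos_cd cosK; last first.
  rewrite in_itv /=; apply/andP; split.
    by rewrite !mulr_ge0 ?pi_ge0 ?invr_ge0 ?ler0n.
  rewrite -mulrA ger_pMr; last exact: pi_gt0.
  rewrite ler_pdivrMr; last by rewrite ltr0n.
  rewrite mul1r ler_nat /cd; lia.
rewrite /rp3_scale.
have n0 : (N.+1)%:R != 0 :> R by rewrite pnatr_eq0.
have p0 : pi != 0 :> R by rewrite gt_eqF // pi_gt0.
move: n0 p0; set n := (N.+1)%:R; set p := pi; clearbody n p => n0 p0.
field; by rewrite n0 p0.
Qed.

End Geo.


Section Main.
Variables (R : realType) (N d : nat).
Local Notation Op := (Op R N d).

Lemma small_of_diam (a r : R) (ha : 0 < a) (S : {set 'I_N.+1}) :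
  diam_le a S r -> small (Num.Def.trunc (r / a)).+1 S.
Proof.
move=> H i j iS jS; have := H i j iS jS; rewrite site_dist_cd => h.
have h2 : (cd i j)%:R <= r / a by rewrite ler_pdivlMr // mulrC.
have := le_lt_trans h2 (truncnS_gt _); rewrite ltr_nat => /ltnW //.
Qed.

Lemma unitary_circ keep (gss : seq (seq (gate R N d))) :
  (forall gs, List.In gs gss -> forall g, List.In g gs -> unitary g.2) ->
  unitary (circ keep gss).
Proof.
elim: gss => [|gs gss IH] H; first exact: unitary_id.
rewrite circ_cons; apply: unitary_mul; last by apply: IH => gs' Hg; apply: H; right.
have {IH} : forall g, List.In g gs -> unitary g.2 by apply: H; left.
elim: gs {H} => [|g gs IH] H /=; first exact: unitary_id.
apply: unitary_mul; last by apply: IH => h Hh; apply: H; right.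
by rewrite /gop; case: (keep g); [apply: H; left|apply: unitary_id].
Qed.

Lemma circ_of_fdqc (a r : R) (ha : 0 < a) D (U : Op) : fdqc a D r U ->
  exists gss : seq (seq (gate R N d)), [/\ (size gss <= D)%N,
    U = circ (fun _ => true) gss &
    forall gs, List.In gs gss -> good_layer (Num.Def.trunc (r / a)).+1 gs].
Proof.
case=> ls [Hs [Hl HU]].
suff [gss [E1 E2 E3]] : exists gss : seq (seq (gate R N d)), [/\ size gss = size ls,
    prod_ops ls = circ (fun _ => true) gss &
    forall gs, List.In gs gss -> good_layer (Num.Def.trunc (r / a)).+1 gs].
  by exists gss; split => //; [rewrite E1|rewrite -E2; apply: opext].
elim: ls Hl {Hs HU} => [|L ls IH] Hl; first by exists [::].
have [gss [E1 E2 E3]] := IH (fun L' H => Hl L' (or_intror H)).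
have [gs [Hpw [Hg HL]]] := Hl L (or_introl erefl).
exists (gs :: gss); split; first by rewrite /= E1.
  rewrite /= circ_cons -E2 (opext HL); congr op_mul; congr prod_ops.
move=> gs' [<-|/E3 //]; split => //.
  by move=> g Hin; have [u [s _]] := Hg g Hin; split => //; apply: supp_loc.
by move=> g Hin; have [_ [_ dm]] := Hg g Hin; apply: small_of_diam.
Qed.

End Main.

Unset Implicit Arguments.

Theorem mainTheorem16 (R : realType) (d : nat) (hd : (2 <= d)%N)
    (a : R) (ha : 0 < a) (D : nat) (r : R) :
  exists N0 : nat, forall N : nat, (N0 <= N)%N ->
    ~ (exists U : Op R N d,
         unitary U /\ fdqc a D r U /\ realizes U (@shift_qca R N d)).
Proof.
pose m := (Num.Def.trunc (r / a)).+1.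
pose L := (D * m)%N.
pose e := L.+1.
exists (5 * L + 10)%N => N HN [U [HU [Hf Hreal]]].
have [gss [Hsz HUe Hgood]] := circ_of_fdqc ha Hf.
have Hsh : forall X, cj U X = shift_qca X by move=> X; apply: opext; apply: Hreal.
have d0 : (0 < d)%N by apply: ltnW.
pose o : 'I_d := Ordinal d0.
pose o' : 'I_d := Ordinal hd.
pose W := [set j : 'I_N.+1 | (j <= L)%N].
pose Z := [set j : 'I_N.+1 | (N - e <= j)%N].
pose Z' := [set j : 'I_N.+1 | (N - e < j)%N].
pose P := Pz R Z o.
pose U' := circ (keepW W) gss.
pose Q := cj U' P.
have HU' : unitary U'.
  apply: unitary_circ => gs Hin g Hg; have [_ Hg' _] := Hgood gs Hin.
  by case: (Hg' g Hg).
have HsL : (size gss * m <= L)%N by rewrite leq_mul2r Hsz orbT.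
have HQ1 : loc (ball Z L :&: ~: W) Q.
  have HP : loc (ball Z 0 :&: ~: W) P.
    apply: loc_mono (@loc_Pz R N d Z o); rewrite finset.subsetI ball_sub /=.
    apply/fintype.subsetP => j; rewrite !inE -ltnNge; lia.
  apply: loc_mono (circ_trunc (V0 := Z) Hgood HP).
  by apply: finset.setSI; apply: ball_mono; rewrite add0n.
have Hcomm : forall j, j \in ball Z L :&: ~: W -> j \notin Z' -> triv j Q.
  move=> j; rewrite !inE -ltnNge -leqNgt => /andP[/existsP [v /andP[vZ cvj]] jW] jZ.
  move: vZ; rewrite inE => vZ.
  have := ltn_ord v; have := ltn_ord j; move: cvj; rewrite /cd /dl => cvj hj hv.
  have jlo : (N - e - L <= j)%N by lia.
  have j1 : (j.-1 < N.+1)%N by lia.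
  pose k : 'I_N.+1 := Ordinal j1.
  have Sk : ordS k = j by apply: val_inj; rewrite /= prednK ?modn_small //; lia.
  have EE : forall a' b', cj U' (Eu R k a' b') = Eu R j a' b'.
    move=> a' b'; rewrite (circ_eq Hgood (V0 := [set k]) (k := 0)).
    - by rewrite -HUe Hsh shift_Eu Sk.
    - by apply: loc_mono (@loc_Eu R N d k a' b'); apply: ball_sub.
    move=> j'; rewrite add0n => /(fintype.subsetP (ball_mono _ HsL)).
    rewrite !inE -ltnNge => /existsP [k' /andP[]]; rewrite inE => /eqP ->.
    rewrite /cd /dl /= => h; have := ltn_ord j'; lia.
  apply: triv_of_comm => a' b'; rewrite -EE /Q -!cjM //.
  congr cj; apply: (loc_commute (@loc_Pz R N d Z o) (@loc_Eu R N d k a' b')) => i.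
  by rewrite !inE => hi; apply/eqP => E; move: hi; rewrite E /=; lia.
have HQloc : loc Z' Q.
  move=> j jZ; case: (boolP (j \in ball Z L :&: ~: W)) => Hj; first exact: Hcomm.
  by apply: HQ1.
have QQ : op_mul Q Q = Q by rewrite /Q -cjM // Pz_idem.
have QA : op_adj Q = Q by rewrite /Q cj_adj Pz_adj.
have trQ : tr Q = (#|[set x | zeroS Z o x]|)%:R by rewrite /Q tr_cj // tr_Pz.
have Hcard : (0 < #|[set x | zeroS Z o x]|)%N.
  apply/card_gt0P; exists [ffun => o]; rewrite inE.
  by apply/forallP => i; apply/implyP => _; rewrite ffunE.
have Hne : tr Q != 0 by rewrite trQ pnatr_eq0 -lt0n.
have := proj_tr_ge QQ QA o HQloc Hne; rewrite trQ ler_nat.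
apply/negP; rewrite -ltnNge; apply: proper_card; apply/properP; split.
  apply/fintype.subsetP => x; rewrite !inE => /forallP H; apply/forallP => i.
  apply/implyP => iZ; move/implyP: (H i); apply; move: iZ; rewrite !inE; exact: ltnW.
have s0 : (N - e < N.+1)%N by lia.
pose s : 'I_N.+1 := Ordinal s0.
exists [ffun i => if i == s then o' else o]; rewrite !inE.
  apply/forallP => i; apply/implyP; rewrite inE => hi; rewrite ffunE.
  case: (eqVneq i s) => [E|_] //; move: hi; rewrite E /=; lia.
apply/negP => /forallP /(_ s); rewrite inE /= leqnn /= ffunE eqxx.
by [].
Qed.
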